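(* Consider the altruistic planner's one-step (myopic) problem described in the context: for each public belief $b\in[0,1]$, maximize $r_A(b,q)=-\beta(q)-C\min(b,1-b,1-q)$ over $q\in[0.5,1]$. Define $$t_M=\begin{cases}\frac{\beta(1)}{C}, & \beta(1)<C(1-p),\\ 0.5, & \text{otherwise.}\end{cases}$$ Then the optimal myopic altruistic policy $\pi^0_A$ (a function with $\pi^0_A(b)\in\arg\sup_{q\in[0.5,1]} r_A(b,q)$ for every $b\in[0,1]$) is given by $$\pi^0_A(b)=\begin{cases}1, & b\in(t_M,1-t_M),\\ p, & \text{otherwise.}\end{cases}$$
   Context: Sequential social learning model: a binary state $\omega\in\{G,B\}$ is drawn once with $\mathbb{P}(\omega=G)=b_1$. Agents $i=1,2,\dots$ act in sequence. Before agent $i$ acts, a planner chooses a signal precision $q_i\in[0.5,1]$; agent $i$ receives a private binary signal $s_i\in\{G,B\}$ with $\mathbb{P}(s_i=\omega)=q_i$, signals being conditionally independent given $\omega$. Given the public belief $b_i$ (probability of $G$ given past precisions and actions), agent $i$ chooses $a_i=s_i$ if $1-q_i\le b_i\le q_i$, $a_i=G$ if $b_i>q_i$, and $a_i=B$ if $b_i<1-q_i$. An agent whose action differs from $\omega$ incurs cost $C>0$; the probability of this is $\min(b_i,1-b_i,1-q_i)$. The altruistic planner has a baseline precision $p\in[0.5,1)$ and a precision-cost function $\beta:[0.5,1]\to[0,\infty)$ that is non-negative, increasing, continuous and concave with $\beta(p)=0$. Its instantaneous reward for choosing precision $q$ at public belief $b$ is $r_A(b,q)=-\beta(q)-C\min(b,1-b,1-q)$.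 *)

(* Defs.v *)
From Stdlib Require Import Reals Lra.
Open Scope R_scope.

Definition nonneg_on (beta : R -> R) : Prop :=
  forall q, 1/2 <= q <= 1 -> 0 <= beta q.

Definition increasing_on (beta : R -> R) : Prop :=
  forall x y, 1/2 <= x <= 1 -> 1/2 <= y <= 1 -> x <= y -> beta x <= beta y.

Definition continuous_on (beta : R -> R) : Prop :=
  forall x, 1/2 <= x <= 1 -> forall eps, 0 < eps -> exists delta, 0 < delta /\
    forall y, 1/2 <= y <= 1 -> Rabs (y - x) < delta -> Rabs (beta y - beta x) < eps.

Definition concave_on (beta : R -> R) : Prop :=
  forall x y t, 1/2 <= x <= 1 -> 1/2 <= y <= 1 -> 0 <= t <= 1 ->
    t * beta x + (1 - t) * beta y <= beta (t * x + (1 - t) * y).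

Definition rA (beta : R -> R) (C b q : R) : R :=
  - beta q - C * Rmin b (Rmin (1 - b) (1 - q)).

Definition is_argmax_half_one (f : R -> R) (q : R) : Prop :=
  1/2 <= q <= 1 /\ forall q', 1/2 <= q' <= 1 -> f q' <= f q.

Definition tM (beta : R -> R) (C p : R) : R :=
  if Rlt_dec (beta 1) (C * (1 - p)) then beta 1 / C else 1/2.

Definition piA0 (beta : R -> R) (C p b : R) : R :=
  if Rlt_dec (tM beta C p) b then
    (if Rlt_dec b (1 - tM beta C p) then 1 else p)
  else p.

(* Main.v *)
Require Import Defs.
From Stdlib Require Import Reals Lra Psatz.
Open Scope R_scope.

Theorem theorem1 (beta : R -> R) (C p : R)
  (hp : 1/2 <= p < 1) (hC : 0 < C)
  (hnn : nonneg_on beta) (hinc : increasing_on beta)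
  (hcont : continuous_on beta) (hconc : concave_on beta)
  (hbp : beta p = 0) :
  forall b, 0 <= b <= 1 -> is_argmax_half_one (rA beta C b) (piA0 beta C p b).
Proof.
  intros b hb.
  assert (hz : forall q, 1/2 <= q <= p -> beta q = 0).
  { intros q hq. assert (h1 := hnn q ltac:(lra)).
    assert (h2 := hinc q p ltac:(lra) ltac:(lra) ltac:(lra)). lra. }
  assert (hlow : forall q, p <= q <= 1 -> (q - p) * beta 1 <= (1 - p) * beta q).
  { intros q hq. set (t := (q - p) / (1 - p)).
    assert (ht : 0 <= t <= 1).
    { unfold t; split.
      - apply Rmult_le_pos; [lra|]. left; apply Rinv_0_lt_compat; lra.
      - apply (Rmult_le_reg_r (1 - p)); [lra|]. unfold Rdiv.
        rewrite Rmult_assoc, Rinv_l by lra. lra. }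
    assert (hc := hconc 1 p t ltac:(lra) ltac:(lra) ht).
    assert (e : t * 1 + (1 - t) * p = q).
    { unfold t; field_simplify; [|lra]. field. lra. }
    rewrite e, hbp in hc.
    assert (e2 : (q - p) = t * (1 - p)) by (unfold t; field; lra).
    rewrite e2. nra. }
  assert (hb1 : 0 <= beta 1) by (apply hnn; lra).
  unfold is_argmax_half_one, rA, piA0, tM.
  destruct (Rlt_dec (beta 1) (C * (1 - p))) as [H1|H1].
  - assert (E1 : forall x, beta 1 / C < x -> beta 1 < C * x).
    { intros x hx. apply (Rmult_lt_compat_l C) in hx; [|lra].
      unfold Rdiv in hx. rewrite (Rmult_comm (beta 1)), <- Rmult_assoc, Rinv_r in hx; lra. }
    assert (E2 : forall x, ~ beta 1 / C < x -> C * x <= beta 1).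
    { intros x hx. apply Rnot_lt_le in hx. apply (Rmult_le_compat_l C) in hx; [|lra].
      unfold Rdiv in hx. rewrite (Rmult_comm (beta 1)), <- Rmult_assoc, Rinv_r in hx; lra. }
    destruct (Rlt_dec (beta 1 / C) b) as [H2|H2];
    [destruct (Rlt_dec b (1 - beta 1 / C)) as [H3|H3]|].
    + apply E1 in H2.
      assert (H3' : beta 1 < C * (1 - b)) by (apply E1; lra).
      split; [lra|]. intros q hq.
      destruct (Rle_dec q p) as [hqp|hqp].
      * rewrite (hz q ltac:(lra)). unfold Rmin; repeat destruct Rle_dec; nra.
      * assert (hl := hlow q ltac:(lra)).
        unfold Rmin; repeat destruct Rle_dec; nra.
    + assert (H3' : C * (1 - b) <= beta 1) by (apply E2; lra).
      split; [lra|]. intros q hq.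
      destruct (Rle_dec q p) as [hqp|hqp].
      * rewrite (hz q ltac:(lra)). unfold Rmin; repeat destruct Rle_dec; nra.
      * assert (hl := hlow q ltac:(lra)).
        unfold Rmin; repeat destruct Rle_dec; nra.
    + apply E2 in H2.
      split; [lra|]. intros q hq.
      destruct (Rle_dec q p) as [hqp|hqp].
      * rewrite (hz q ltac:(lra)). unfold Rmin; repeat destruct Rle_dec; nra.
      * assert (hl := hlow q ltac:(lra)).
        unfold Rmin; repeat destruct Rle_dec; nra.
  - assert (hp1 : 1/2 <= p <= 1) by lra.
    destruct (Rlt_dec (1/2) b); [destruct (Rlt_dec b (1 - 1/2)); [lra|]|];
    split; try lra; intros q hq;
    (destruct (Rle_dec q p) as [hqp|hqp];
      [ rewrite (hz q ltac:(lra)); unfold Rmin; repeat destruct Rle_dec; nra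
      | assert (hl := hlow q ltac:(lra)); unfold Rmin; repeat destruct Rle_dec; nra]).
Qed.
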